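(* Let $A=(a_1,\ldots,a_q)\in\mathbb{R}^{p\times q}$ be entrywise nonnegative, $\eta_1,\eta_2>0$, $\gamma>0$, $\mathcal{C}=\{(W,X)\in\mathbb{R}^{p\times n}\times\mathbb{R}^{n\times q}\mid W\ge0,\ X\ge0\}$ (entrywise), and let $(W^*,X^* )$ be a d-stationary point of $$\min_{W,X}\ \tfrac12\|A-WX\|_F^2+\tfrac{\eta_1}{2}\|W\|_F^2+\tfrac{\eta_2}{2}\|X\|_F^2+\gamma\sum_{j\in[q]}T_{1,n,1}(x_j)+\delta_{\mathcal C}(W,X),$$ where $x_j$ is the $j$-th column of $X$. If $$\gamma>\max_{j\in[q]}\frac{\|a_j\|_2}{\sqrt2}\Big(\frac{\|A\|_F}{\sqrt{\eta_1}}+\sqrt{\eta_2}\Big),$$ then $T_{1,n,1}(x_j^* )=0$ (i.e., $x_j^*$ has at most one nonzero entry) for all $j\in[q]$.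
   Context: $T_{1,n,1}(x)$ is the sum of the $n-1$ smallest values among $|x_1|,\ldots,|x_n|$. $\delta_{\mathcal C}$ is the indicator function of $\mathcal C$. Feasible cone $\mathcal{F}(z;\mathcal{C})=\{d\mid \exists\varsigma'>0:\ z+\varsigma d\in\mathcal{C}\ \forall\varsigma\in(0,\varsigma')\}$. A point of $\mathcal C$ is d-stationary if the directional derivative of the objective there is $\ge0$ in every direction of $\mathcal{F}(\cdot;\mathcal{C})$. *)

(* Defs.v *)
From HB Require Import structures.
From mathcomp Require Import all_boot all_order all_algebra.
From mathcomp Require Import all_classical all_reals all_analysis.
Set Implicit Arguments. Unset Strict Implicit. Unset Printing Implicit Defensive.
Import Order.TTheory GRing.Theory Num.Theory.
Import numFieldNormedType.Exports.
Local Open Scope ring_scope.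
Local Open Scope classical_set_scope.

Definition sqfrob (R : realType) (m k : nat) (M : 'M[R]_(m, k)) : R :=
  \sum_(i < m) \sum_(j < k) M i j ^+ 2.

Definition frob (R : realType) (m k : nat) (M : 'M[R]_(m, k)) : R :=
  Num.sqrt (sqfrob M).

Definition norm2 (R : realType) (m : nat) (v : 'cV[R]_m) : R :=
  Num.sqrt (\sum_(i < m) v i 0 ^+ 2).

Definition T1n1 (R : realType) (n : nat) (x : 'cV[R]_n) : R :=
  \sum_(i < n.-1) nth 0 (sort <=%R [seq `|x k 0| | k <- enum 'I_n]) i.

Definition mx_nonneg (R : realType) (m k : nat) (M : 'M[R]_(m, k)) : bool :=
  [forall i, forall j, 0 <= M i j].

Definition inC (R : realType) (p n q : nat) (W : 'M[R]_(p, n)) (X : 'M[R]_(n, q))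
  : bool := mx_nonneg W && mx_nonneg X.

Definition fobj (R : realType) (p n q : nat) (A : 'M[R]_(p, q))
  (eta1 eta2 gamma : R) (W : 'M[R]_(p, n)) (X : 'M[R]_(n, q)) : R :=
  2^-1 * sqfrob (A - W *m X) + eta1 / 2 * sqfrob W + eta2 / 2 * sqfrob X
  + gamma * \sum_(j < q) T1n1 (col j X).

Definition Phi (R : realType) (p n q : nat) (A : 'M[R]_(p, q))
  (eta1 eta2 gamma : R) (W : 'M[R]_(p, n)) (X : 'M[R]_(n, q)) : \bar R :=
  ((fobj A eta1 eta2 gamma W X)%:E + (if inC W X then 0 else +oo))%E.

Definition feasible_dir (R : realType) (p n q : nat)
  (W : 'M[R]_(p, n)) (X : 'M[R]_(n, q)) (DW : 'M[R]_(p, n)) (DX : 'M[R]_(n, q))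
  : Prop :=
  exists2 s' : R, 0 < s' &
    forall s : R, 0 < s < s' -> inC (W + s *: DW) (X + s *: DX).

Definition dstationary (R : realType) (p n q : nat) (A : 'M[R]_(p, q))
  (eta1 eta2 gamma : R) (W : 'M[R]_(p, n)) (X : 'M[R]_(n, q)) : Prop :=
  inC W X /\
  forall (DW : 'M[R]_(p, n)) (DX : 'M[R]_(n, q)),
    feasible_dir W X DW DX ->
    exists l : \bar R,
      ((fun t : R => ((Phi A eta1 eta2 gamma (W + t *: DW) (X + t *: DX)
                        - Phi A eta1 eta2 gamma W X) * (t^-1)%:E)%E)
         @ 0^'+ --> l) /\ (0 <= l)%E.

(* Main.v *)
Require Import Defs.
From HB Require Import structures.
From mathcomp Require Import all_boot all_order all_algebra.
From mathcomp Require Import all_classical all_reals all_analysis.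
From mathcomp Require Import ring lra.
Import Order.TTheory GRing.Theory Num.Theory.
Import numFieldNormedType.Exports.
Local Open Scope ring_scope.
Set Implicit Arguments. Unset Strict Implicit. Unset Printing Implicit Defensive.
Lemma T1n1E (R : realType) n (x : 'cV[R]_n) :
  T1n1 x = \sum_k `|x k 0| - \big[Num.max/0]_k `|x k 0|.
Proof.
rewrite /T1n1; case: n x => [|n] x.
  by rewrite !big_ord0 subr0.
set l := [seq _ | _ <- _].
set s := sort _ l.
have ss : size s = n.+1 by rewrite size_sort size_map size_enum_ord.
have [s1 [y es]] : exists s1 y, s = rcons s1 y.
  by case/lastP: s ss => [//|s1 y _]; exists s1, y.
have s1s : size s1 = n by move: ss; rewrite es size_rcons => -[].
have sumlE : \sum_(v <- l) v = \sum_k `|x k 0|.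
  by rewrite big_map big_enum.
have sumsE : \sum_(v <- s) v = \sum_(v <- l) v.
  by apply: perm_big; rewrite perm_sort.
have memsl v : (v \in s) = (v \in l) by rewrite mem_sort.
have srt : sorted <=%R s by apply: sort_sorted; exact: le_total.
have s1y : forall v, v \in s1 -> v <= y.
  move: srt; rewrite es -rev_sorted rev_rcons /= => /order_path_min.
  move=> /(_ (fun a b c hab hca => le_trans hca hab)) /allP h v vs1.
  by apply: h; rewrite mem_rev.
have yE : y = \big[Num.max/0]_k `|x k 0|.
  have : y \in l by rewrite -memsl es mem_rcons inE eqxx.
  case/mapP => k _ yk.
  apply: le_anti; apply/andP; split.
    by rewrite yk; apply: le_bigmax.
  apply: bigmax_le => [|i _]; first by rewrite yk.
  have : `|x i 0| \in s by rewrite memsl; apply: map_f; rewrite mem_enum.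
  rewrite es mem_rcons inE => /orP[/eqP -> //|]; exact: s1y.
have -> : \sum_(i < n.+1.-1) nth 0 s i = \sum_(v <- s1) v.
  rewrite (big_nth 0) big_mkord s1s /=; apply: eq_bigr => i _.
  by rewrite es nth_rcons s1s ltn_ord.
rewrite -sumlE -sumsE es big_rcons /= -yE addrK.

by [].
Qed.
Lemma T1n1_dec (R : realType) n (x : 'cV[R]_n) :
  (forall k, 0 <= x k 0) -> T1n1 x != 0 ->
  exists i, 0 < x i 0 /\ forall t, 0 < t < x i 0 ->
    T1n1 (x - t *: delta_mx i 0) = T1n1 x - t.
Proof.
move=> x0 T0; move: T0; rewrite !T1n1E => T0.
case: n x x0 T0 => [|n] x x0 T0.
  by move: T0; rewrite !big_ord0 subr0 eqxx.
have mE := @bigmax_eq_arg _ _ _ 0 ord0 predT (fun k => `|x k 0|) isT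
  (fun i _ => normr_ge0 _).
have {mE} [m mE] : exists m, \big[Num.max/0]_k `|x k 0| = `|x m 0|.
  by eexists; exact: mE.
rewrite mE in T0 *.
have [i /andP[im xi]] : exists i, (i != m) && (x i 0 != 0).
  case: (boolP [exists i, (i != m) && (x i 0 != 0)]) => [/existsP//|/existsPn h].
  move: T0; rewrite (bigD1 m) //= addrAC subrr add0r big1 ?eqxx // => k km.
  by move: (h k); rewrite km /= negbK => /eqP ->; rewrite normr0.
have xip : 0 < x i 0 by rewrite lt_def xi x0.
exists i; split => // t /andP[t0 tx].
have yE k : (x - t *: delta_mx i 0) k 0 = x k 0 - t * (k == i)%:R.
  by rewrite !mxE eqxx andbT.
have ym : `|(x - t *: delta_mx i 0) m 0| = `|x m 0|.
  by rewrite yE eq_sym (negbTE im) mulr0 subr0.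
have yi : `|(x - t *: delta_mx i 0) i 0| = `|x i 0| - t.
  by rewrite yE eqxx mulr1 !ger0_norm ?subr_ge0 ?x0 // ltW.
have xim : `|x i 0| <= `|x m 0| by rewrite -mE le_bigmax.
rewrite T1n1E.
have -> : \big[Num.max/0]_k `|(x - t *: delta_mx i 0) k 0| = `|x m 0|.
  apply: le_anti; apply/andP; split; last first.
    by rewrite -ym; apply: le_bigmax.
  apply: bigmax_le => // k _.
  case: (eqVneq k i) => [->|ki].
    by rewrite yi; apply: le_trans xim; rewrite lerBlDr lerDl ltW.
  by rewrite yE (negbTE ki) mulr0 subr0 -mE le_bigmax.
rewrite (bigD1 i) //= [in RHS](bigD1 i) //= yi.
have -> : \sum_(k | k != i) `|(x - t *: delta_mx i 0) k 0| =
          \sum_(k | k != i) `|x k 0|.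
  by apply: eq_bigr => k ki; rewrite yE (negbTE ki) mulr0 subr0.
ring.
Qed.
Section Aux.
Local Open Scope classical_set_scope.
Variable R : realType.

Definition dotm m k (M N : 'M[R]_(m, k)) : R := \sum_i \sum_j M i j * N i j.

Lemma sqfrobD m k (M N : 'M[R]_(m, k)) t :
  sqfrob (M + t *: N) = sqfrob M + 2 * t * dotm M N + t ^+ 2 * sqfrob N.
Proof.
rewrite /sqfrob /dotm !mulr_sumr -!big_split /=; apply: eq_bigr => i _.
rewrite !mulr_sumr -!big_split /=; apply: eq_bigr => j _.
rewrite !mxE; ring.
Qed.

Lemma dotmB m k (M N P : 'M[R]_(m, k)) : dotm (M - N) P = dotm M P - dotm N P.
Proof.
rewrite /dotm -sumrB; apply: eq_bigr => i _; rewrite -sumrB.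
by apply: eq_bigr => j _; rewrite !mxE mulrBl.
Qed.

Lemma dotmNr m k (M N : 'M[R]_(m, k)) : dotm M (- N) = - dotm M N.
Proof.
rewrite /dotm -sumrN; apply: eq_bigr => i _; rewrite -sumrN.
by apply: eq_bigr => j _; rewrite !mxE mulrN.
Qed.

Lemma dotmm m k (M : 'M[R]_(m, k)) : dotm M M = sqfrob M.
Proof. by rewrite /dotm /sqfrob; apply: eq_bigr => i _; apply: eq_bigr => j _; rewrite expr2. Qed.

Lemma dotm_ge0 m k (M N : 'M[R]_(m, k)) :
  (forall i j, 0 <= M i j) -> (forall i j, 0 <= N i j) -> 0 <= dotm M N.
Proof. by move=> hM hN; do 2 (apply: sumr_ge0 => ? _); apply: mulr_ge0. Qed.

Lemma sqfrob_ge0 m k (M : 'M[R]_(m, k)) : 0 <= sqfrob M.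
Proof. by do 2 (apply: sumr_ge0 => ? _); apply: sqr_ge0. Qed.

Lemma cauchy_schwarz m (a b : 'I_m -> R) :
  (\sum_r a r * b r) ^+ 2 <= (\sum_r a r ^+ 2) * (\sum_r b r ^+ 2).
Proof.
set S := \sum_r a r * b r; set P := \sum_r a r ^+ 2; set Q := \sum_r b r ^+ 2.
have Q0 : 0 <= Q by apply: sumr_ge0 => r _; apply: sqr_ge0.
have key : 0 <= Q * (Q * P - S ^+ 2).
  have -> : Q * (Q * P - S ^+ 2) = \sum_r (Q * a r - S * b r) ^+ 2.
    have -> : \sum_r (Q * a r - S * b r) ^+ 2 =
      \sum_r (Q ^+ 2 * a r ^+ 2 - 2 * Q * S * (a r * b r) + S ^+ 2 * b r ^+ 2).
      by apply: eq_bigr => r _; ring.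
    rewrite big_split /= sumrB -!mulr_sumr -/P -/Q -/S; ring.
  by apply: sumr_ge0 => r _; apply: sqr_ge0.
case: (ltrP 0 Q) => Qp.
  by move: key; rewrite pmulr_rge0 // subr_ge0 mulrC.
have Q00 : Q = 0 by apply: le_anti; rewrite Qp Q0.
have b0 r : b r = 0.
  apply/eqP; rewrite -sqrf_eq0; apply/eqP.
  move/eqP: Q00; rewrite psumr_eq0 => [/allP h|r' _]; last exact: sqr_ge0.
  by apply/eqP; apply: h; rewrite mem_index_enum.
have -> : S = 0 by rewrite /S big1 // => r _; rewrite b0 mulr0.
by rewrite expr0n /= mulr_ge0 // sumr_ge0 // => r _; apply: sqr_ge0.
Qed.

Lemma lim_affine (c d dl : R) (f : R -> \bar R) (l : \bar R) :
  0 < dl -> (forall t, 0 < t < dl -> f t = (c + d * t)%:E) ->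
  f @ 0^'+ --> l -> l = c%:E.
Proof.
move=> dl0 hf fl.
have g : (fun t => (c + d * t)%:E) @ 0^'+ --> c%:E.
  apply: cvg_EFin; first by near=> t.
  rewrite /comp /=.
  apply: cvg_at_right_filter.
  have := @cvgD _ _ _ (nbhs (0:R)) _ (fun=> c) (fun z => d * z) c (d * 0)
    (cvg_cst c) (cvgM (cvg_cst d) (@cvg_id _ (nbhs (0:R)))).
  by rewrite mulr0 addr0; apply; exact: _.
have g' : f @ 0^'+ --> c%:E.
  apply: cvg_trans g; apply: near_eq_cvg.
  near=> t; apply/esym; apply: hf; apply/andP; split; near: t.
    by apply: nbhs_right_gt.
  by apply: nbhs_right_lt.
exact: (cvg_unique _ fl g').
Unshelve. all: end_near.
Qed.

Lemma stat_dir p n q (A : 'M[R]_(p, q)) e1 e2 g (W : 'M[R]_(p, n))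
  (X : 'M[R]_(n, q)) (DW : 'M[R]_(p, n)) (DX : 'M[R]_(n, q)) (c d dl : R) :
  dstationary A e1 e2 g W X -> 0 < dl ->
  (forall t, 0 < t < dl -> inC (W + t *: DW) (X + t *: DX) /\
     fobj A e1 e2 g (W + t *: DW) (X + t *: DX)
       = fobj A e1 e2 g W X + c * t + d * t ^+ 2) -> 0 <= c.
Proof.
case=> inWX H dl0 hf.
have [|l [fl l0]] := H DW DX.
  by exists dl => // s /hf[].
suff lE : l = c%:E by move: l0; rewrite lE lee_fin.
apply: (lim_affine (d := d) dl0 _ fl) => t /[dup] /andP[t0 _] /hf [inC' fE].
rewrite /Phi inC' inWX fE !adde0 -EFinB -EFinM; congr (_%:E).
by field; rewrite lt0r_neq0.
Qed.

End Aux.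

Lemma nonnegP (R : realType) m k (M : 'M[R]_(m, k)) :
  mx_nonneg M -> forall i j, 0 <= M i j.
Proof. by move/forallP => h i j; exact: (forallP (h i) j). Qed.

Unset Implicit Arguments.

Theorem mainTheorem12 (R : realType) (p n q : nat) (A : 'M[R]_(p, q))
  (eta1 eta2 gamma : R) (W : 'M[R]_(p, n)) (X : 'M[R]_(n, q)) :
  mx_nonneg A -> 0 < eta1 -> 0 < eta2 -> 0 < gamma ->
  dstationary A eta1 eta2 gamma W X ->
  \big[Num.max/0]_(j < q)
     (norm2 (col j A) / Num.sqrt 2 *
      (frob A / Num.sqrt eta1 + Num.sqrt eta2)) < gamma ->
  forall j : 'I_q, T1n1 (col j X) = 0.
Proof.
move=> A0 e10 e20 g0 dst hmax j.
have [inWX _] := dst.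
move/andP: (inWX) => [/nonnegP W0 /nonnegP X0].
move/nonnegP: A0 => A0.
have hW : 0 <= 2^-1 * (2 * dotm (A - W *m X) (W *m X)) + eta1 / 2 * (2 * dotm W (- W)).
  apply: (@stat_dir R p n q A eta1 eta2 gamma W X (- W) 0 _
     (2^-1 * sqfrob (W *m X) + eta1 / 2 * sqfrob (- W)) 1 dst ltr01).
  move=> t /andP[t0 t1]; split.
    rewrite /inC scaler0 addr0; apply/andP; split; last by apply/forallP => a; apply/forallP.
    apply/forallP => a; apply/forallP => b; rewrite !mxE.
    have := W0 a b; nra.
  have E1 : A - (W + t *: - W) *m (X + t *: 0) = (A - W *m X) + t *: (W *m X).
    by rewrite scaler0 addr0 mulmxDl -scalemxAl mulNmx scalerN opprD opprK addrA.
  rewrite /fobj E1 scaler0 addr0 !sqfrobD; ring.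
have sWb : 4 * eta1 * sqfrob W <= sqfrob A.
  have h2 := sqfrob_ge0 (A + (-2) *: (W *m X)).
  rewrite sqfrobD in h2.
  move: hW; rewrite dotmB dotmNr !dotmm => hW.
  have sW0 := sqfrob_ge0 W.
  nra.
apply/eqP; apply: contraT => T0; suff : False by [].
have cX0 k : 0 <= (col j X) k 0 by rewrite mxE.
have [i [xi dec]] := T1n1_dec cX0 T0.
rewrite mxE in xi.
pose E : 'M[R]_(n, q) := delta_mx i j.
have hX : 0 <= 2^-1 * (2 * dotm (A - W *m X) (W *m E)) + eta2 / 2 * (2 * dotm X (- E))
             - gamma.
  apply: (@stat_dir R p n q A eta1 eta2 gamma W X 0 (- E) _
     (2^-1 * sqfrob (W *m E) + eta2 / 2 * sqfrob (- E)) (X i j) dst xi).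
  move=> t /andP[t0 t1]; split.
    rewrite /inC scaler0 addr0; apply/andP; split; first by apply/forallP => a; apply/forallP => b; apply: W0.
    apply/forallP => a; apply/forallP => b; rewrite !mxE.
    case: (boolP ((a == i) && (b == j))) => [/andP[/eqP -> /eqP ->]|_] /=.
      lra.
    rewrite oppr0 mulr0 addr0; exact: X0.
  have E1 : A - (W + t *: 0) *m (X + t *: - E) = (A - W *m X) + t *: (W *m E).
    by rewrite scaler0 addr0 mulmxDr -scalemxAr mulmxN scalerN opprD opprK addrA.
  have TE : \sum_(j0 < q) T1n1 (col j0 (X + t *: - E)) =
            \sum_(j0 < q) T1n1 (col j0 X) - t.
    rewrite (bigD1 j) //= [in RHS](bigD1 j) //=.
    have -> : col j (X + t *: - E) = col j X - t *: delta_mx i 0.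
      apply/matrixP => a b; rewrite !mxE !ord1 /=. by rewrite !eqxx !andbT mulrN.
    rewrite dec; last by rewrite mxE t0 t1.
    have -> : \sum_(j0 < q | j0 != j) T1n1 (col j0 (X + t *: - E)) =
              \sum_(j0 < q | j0 != j) T1n1 (col j0 X).
      apply: eq_bigr => j0 j0j; congr T1n1; apply/matrixP => a b.
      rewrite !mxE (negbTE j0j) andbF. by rewrite mulr0n oppr0 mulr0 addr0.
    ring.
  rewrite /fobj E1 TE scaler0 addr0 !sqfrobD; ring.
have E0 a b : 0 <= E a b by rewrite mxE ler0n.
have dXE : 0 <= dotm X E by apply: dotm_ge0.
have WX0 a b : 0 <= (W *m X) a b.
  by rewrite mxE; apply: sumr_ge0 => l _; apply: mulr_ge0.
have WE0 a b : 0 <= (W *m E) a b.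
  by rewrite mxE; apply: sumr_ge0 => l _; apply: mulr_ge0.
have dWXE : 0 <= dotm (W *m X) (W *m E) by apply: dotm_ge0.
have WEe r k : (W *m E) r k = W r i * (k == j)%:R.
  rewrite mxE (bigD1 i) //= big1 => [|l li]; last by rewrite mxE (negbTE li) mulr0.
  by rewrite mxE eqxx addr0.
have SE : dotm A (W *m E) = \sum_r A r j * W r i.
  apply: eq_bigr => r _; rewrite (bigD1 j) //= big1 => [|k kj].
    by rewrite WEe eqxx mulr1 addr0.
  by rewrite WEe (negbTE kj) mulr0 mulr0.
set S := \sum_r A r j * W r i in SE.
have gS : gamma <= S.
  move: hX; rewrite dotmB dotmNr SE => hX; nra.
have cs := cauchy_schwarz (fun r => A r j) (fun r => W r i).
rewrite /= -/S in cs.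
have NW : \sum_r W r i ^+ 2 <= sqfrob W.
  rewrite /sqfrob; apply: ler_sum => r _; rewrite (bigD1 i) //= lerDl.
  by apply: sumr_ge0 => k _; apply: sqr_ge0.
have NA : norm2 (col j A) ^+ 2 = \sum_r A r j ^+ 2.
  rewrite /norm2 sqr_sqrtr; last by apply: sumr_ge0 => r _; exact: sqr_ge0.
  by apply: eq_bigr => r _; rewrite mxE.
have FA : frob A ^+ 2 = sqfrob A by rewrite /frob sqr_sqrtr // sqfrob_ge0.
have hj : norm2 (col j A) / Num.sqrt 2 * (frob A / Num.sqrt eta1 + Num.sqrt eta2)
    < gamma.
  apply: le_lt_trans hmax; first [exact: le_bigmax | rewrite (bigD1 j) //= le_max lexx //].
set al := norm2 (col j A) in NA hj.
set F := frob A in FA hj.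
set s1 := Num.sqrt eta1 in hj.
set s2 := Num.sqrt 2 in hj.
set s3 := Num.sqrt eta2 in hj.
have s1p : 0 < s1 by rewrite sqrtr_gt0.
have s2p : 0 < s2 by rewrite sqrtr_gt0.
have s30 : 0 <= s3 by rewrite sqrtr_ge0.
have al0 : 0 <= al by rewrite sqrtr_ge0.
have F0 : 0 <= F by rewrite sqrtr_ge0.
have s1E : s1 ^+ 2 = eta1 by rewrite sqr_sqrtr // ltW.
have s2E : s2 ^+ 2 = 2 by rewrite sqr_sqrtr.
pose c := al / s2 * (F / s1).
have c0 : 0 <= c by rewrite /c !mulr_ge0 // invr_ge0 ltW.
have cle : c <= al / s2 * (F / s1 + s3).
  by rewrite /c ler_wpM2l ?lerDl // mulr_ge0 // invr_ge0 ltW.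
have cE : c * s2 * s1 = al * F.
  by rewrite /c; field; apply/andP; split; rewrite lt0r_neq0.
have cS : c < S by apply: le_lt_trans cle (lt_le_trans hj gS).
have c2S : c ^+ 2 < S ^+ 2 by nra.
have c2E : c ^+ 2 * 2 * eta1 = (\sum_r A r j ^+ 2) * sqfrob A.
  rewrite -NA -FA; have := congr1 (fun z => z ^+ 2) cE; rewrite /= !exprMn s2E s1E => -> //.
set NAs := \sum_r A r j ^+ 2 in cs c2E NA.
set NWs := \sum_r W r i ^+ 2 in cs NW.
have NAs0 : 0 <= NAs by rewrite -NA sqr_ge0.
have h1 : S ^+ 2 <= NAs * sqfrob W.
  apply: le_trans cs _; rewrite ler_wpM2l //.
have h2 : 4 * eta1 * (NAs * sqfrob W) <= NAs * sqfrob A.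
  have := ler_wpM2l NAs0 sWb; nra.
nra.
Qed.
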